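(* Let $\alpha$ be an arbitrary constant and let $u=u(x,y,z,t)$ be a smooth function with $u_x\neq 0$. Put $m=(u_y-u_z)/u_x$ and $n=(u_z-u_t)/u_x$, and suppose \[ D_t(m)+\alpha\, m\, D_x(n)-D_z(n)-\alpha\, n\, D_x(m)=0. \qquad (\ast) \] For a smooth function $U$ put $\delta m=\frac{U_y-U_z}{u_x}-\frac{(u_y-u_z)U_x}{u_x^2}$, $\delta n=\frac{U_z-U_t}{u_x}-\frac{(u_z-u_t)U_x}{u_x^2}$ and \[ \ell(U)=D_t(\delta m)+\alpha\,\delta m\, D_x(n)+\alpha\, m\, D_x(\delta n)-D_z(\delta n)-\alpha\,\delta n\, D_x(m)-\alpha\, n\, D_x(\delta m), \] and call $U$ a symmetry of $(\ast)$ (at $u$) if $\ell(U)=0$. Let \[ f_1=\frac{\alpha(u_{xy}-u_{xz})-u_{xz}}{u_x},\qquad f_2=\frac{\alpha(u_{xz}-u_{xt})-u_{xt}}{u_x}, \] and consider the relations, for an unknown function $\tilde U$, \[ \begin{aligned} \tilde U_z-\alpha\frac{u_y-u_z}{u_x}\tilde U_x+f_1\tilde U&=-(1+\alpha)\frac{u_y-u_z}{u_x}U_x+U_y+f_1U,\\ \tilde U_t+\alpha\frac{u_t-u_z}{u_x}\tilde U_x+f_2\tilde U&=(1+\alpha)\frac{u_t-u_z}{u_x}U_x+U_z+f_2U. \end{aligned}\qquad (\ast\ast) \] Then these relations define a recursion operator for $(\ast)$, namely: (a) if $u$ satisfies $(\ast)$ and $\ell(U)=0$, then the system $(\ast\ast)$,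 regarded as an overdetermined first-order system for $\tilde U$, is compatible (its cross-differentiation compatibility condition holds identically by virtue of $(\ast)$, $\ell(U)=0$ and their differential consequences); and (b) if $u$ satisfies $(\ast)$, $\ell(U)=0$, and $\tilde U$ satisfies $(\ast\ast)$, then $\ell(\tilde U)=0$, i.e. $\tilde U$ is again a symmetry of $(\ast)$.
   Context: Subscripts denote partial derivatives and $D_x,D_y,D_z,D_t$ denote total derivatives. $\ell(U)$ is the linearization of the left-hand side of $(\ast)$, i.e. the coefficient of $\varepsilon$ after replacing $u$ by $u+\varepsilon U$. Symmetries may be nonlocal, i.e. $U,\tilde U$ are arbitrary smooth functions satisfying the stated equations. Equation $(\ast)$ admits the Lax pair $\psi_y=\lambda\psi_z+c\,m\,\psi_x$, $\psi_z=c\,n\,\psi_x+\lambda\psi_t$ with $c=1+\alpha-\lambda\alpha$ and spectral parameter $\lambda$. *)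

(* Defs.v *)
From Stdlib Require Import Reals List ClassicalEpsilon.
Open Scope R_scope.

Definition fn := R -> R -> R -> R -> R.

Inductive var := VX | VY | VZ | VT.

Definition line (v : var) (f : fn) (x y z t : R) : R -> R :=
  match v with
  | VX => fun s => f s y z t
  | VY => fun s => f x s z t
  | VZ => fun s => f x y s t
  | VT => fun s => f x y z s
  end.

Definition coord (v : var) (x y z t : R) : R :=
  match v with VX => x | VY => y | VZ => z | VT => t end.

(** partial derivative w.r.t. v (the true derivative whenever it exists; 0 otherwise) *)
Definition pd (v : var) (f : fn) : fn := fun x y z t =>
  match excluded_middle_informative
          (exists l, derivable_pt_lim (line v f x y z t) (coord v x y z t) l) with
  | left H => proj1_sig (constructive_indefinite_description _ H)
  | right _ => 0
  end.

Definition PDx := pd VX.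
Definition PDy := pd VY.
Definition PDz := pd VZ.
Definition PDt := pd VT.

Definition iter_pd (vs : list var) (f : fn) : fn := fold_right pd f vs.

Definition open4 (O : R -> R -> R -> R -> Prop) : Prop :=
  forall x y z t, O x y z t -> exists r, 0 < r /\
    forall x' y' z' t', Rabs (x' - x) < r -> Rabs (y' - y) < r ->
      Rabs (z' - z) < r -> Rabs (t' - t) < r -> O x' y' z' t'.

Definition cont4_at (f : fn) (x y z t : R) : Prop :=
  forall eps, 0 < eps -> exists delta, 0 < delta /\
    forall x' y' z' t', Rabs (x' - x) < delta -> Rabs (y' - y) < delta ->
      Rabs (z' - z) < delta -> Rabs (t' - t) < delta ->
      Rabs (f x' y' z' t' - f x y z t) < eps.

Definition smooth_on (O : R -> R -> R -> R -> Prop) (f : fn) : Prop :=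
  forall vs : list var, forall x y z t, O x y z t ->
    cont4_at (iter_pd vs f) x y z t /\
    forall v, exists l,
      derivable_pt_lim (line v (iter_pd vs f) x y z t) (coord v x y z t) l.

Definition m_of (u : fn) : fn := fun x y z t =>
  (PDy u x y z t - PDz u x y z t) / PDx u x y z t.
Definition n_of (u : fn) : fn := fun x y z t =>
  (PDz u x y z t - PDt u x y z t) / PDx u x y z t.

Definition eq_star (alpha : R) (u : fn) : fn := fun x y z t =>
  PDt (m_of u) x y z t + alpha * m_of u x y z t * PDx (n_of u) x y z t
  - PDz (n_of u) x y z t - alpha * n_of u x y z t * PDx (m_of u) x y z t.

Definition delta_m (u U : fn) : fn := fun x y z t =>
  (PDy U x y z t - PDz U x y z t) / PDx u x y z t
  - (PDy u x y z t - PDz u x y z t) * PDx U x y z t / (PDx u x y z t) ^ 2.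
Definition delta_n (u U : fn) : fn := fun x y z t =>
  (PDz U x y z t - PDt U x y z t) / PDx u x y z t
  - (PDz u x y z t - PDt u x y z t) * PDx U x y z t / (PDx u x y z t) ^ 2.

Definition ell (alpha : R) (u U : fn) : fn := fun x y z t =>
  PDt (delta_m u U) x y z t
  + alpha * delta_m u U x y z t * PDx (n_of u) x y z t
  + alpha * m_of u x y z t * PDx (delta_n u U) x y z t
  - PDz (delta_n u U) x y z t
  - alpha * delta_n u U x y z t * PDx (m_of u) x y z t
  - alpha * n_of u x y z t * PDx (delta_m u U) x y z t.

Definition f1 (alpha : R) (u : fn) : fn := fun x y z t =>
  (alpha * (PDx (PDy u) x y z t - PDx (PDz u) x y z t) - PDx (PDz u) x y z t)
  / PDx u x y z t.
Definition f2 (alpha : R) (u : fn) : fn := fun x y z t =>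
  (alpha * (PDx (PDz u) x y z t - PDx (PDt u) x y z t) - PDx (PDt u) x y z t)
  / PDx u x y z t.

Definition rhs1 (alpha : R) (u U : fn) : fn := fun x y z t =>
  - (1 + alpha) * ((PDy u x y z t - PDz u x y z t) / PDx u x y z t) * PDx U x y z t
  + PDy U x y z t + f1 alpha u x y z t * U x y z t.
Definition rhs2 (alpha : R) (u U : fn) : fn := fun x y z t =>
  (1 + alpha) * ((PDt u x y z t - PDz u x y z t) / PDx u x y z t) * PDx U x y z t
  + PDz U x y z t + f2 alpha u x y z t * U x y z t.

Definition lhs1 (alpha : R) (u W : fn) : fn := fun x y z t =>
  PDz W x y z t
  - alpha * ((PDy u x y z t - PDz u x y z t) / PDx u x y z t) * PDx W x y z t
  + f1 alpha u x y z t * W x y z t.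
Definition lhs2 (alpha : R) (u W : fn) : fn := fun x y z t =>
  PDt W x y z t
  + alpha * ((PDt u x y z t - PDz u x y z t) / PDx u x y z t) * PDx W x y z t
  + f2 alpha u x y z t * W x y z t.

(** ( ** ) solved for the z- and t-derivatives:
      W_z = cPx W_x + cP0 W + rhs1,   W_t = cQx W_x + cQ0 W + rhs2 *)
Definition cPx (alpha : R) (u : fn) : fn := fun x y z t =>
  alpha * ((PDy u x y z t - PDz u x y z t) / PDx u x y z t).
Definition cP0 (alpha : R) (u : fn) : fn := fun x y z t => - f1 alpha u x y z t.
Definition cQx (alpha : R) (u : fn) : fn := fun x y z t =>
  - (alpha * ((PDt u x y z t - PDz u x y z t) / PDx u x y z t)).
Definition cQ0 (alpha : R) (u : fn) : fn := fun x y z t => - f2 alpha u x y z t.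

Definition Pz (alpha : R) (u U W : fn) : fn := fun x y z t =>
  cPx alpha u x y z t * PDx W x y z t + cP0 alpha u x y z t * W x y z t
  + rhs1 alpha u U x y z t.
Definition Qt (alpha : R) (u U W : fn) : fn := fun x y z t =>
  cQx alpha u x y z t * PDx W x y z t + cQ0 alpha u x y z t * W x y z t
  + rhs2 alpha u U x y z t.

(** Cross-differentiation compatibility expression of ( ** ):
    D_t(W_z) - D_z(W_t), where W_z, W_t are replaced by their values from
    ( ** ) and W_{xt}, W_{xz} by the x-derivatives of those values.
    It depends only on the jet (W, W_x, W_xx) of the unknown W; the system
    is compatible iff it vanishes for every such jet, i.e. for every smooth W. *)
Definition compat_expr (alpha : R) (u U W : fn) : fn := fun x y z t =>
  (PDt (cPx alpha u) x y z t * PDx W x y z t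
   + cPx alpha u x y z t * PDx (Qt alpha u U W) x y z t
   + PDt (cP0 alpha u) x y z t * W x y z t
   + cP0 alpha u x y z t * Qt alpha u U W x y z t
   + PDt (rhs1 alpha u U) x y z t)
  - (PDz (cQx alpha u) x y z t * PDx W x y z t
     + cQx alpha u x y z t * PDx (Pz alpha u U W) x y z t
     + PDz (cQ0 alpha u) x y z t * W x y z t
     + cQ0 alpha u x y z t * Pz alpha u U W x y z t
     + PDz (rhs2 alpha u U) x y z t).

(* Main.v *)
Require Import Defs.
From Stdlib Require Import Reals List.
From Stdlib Require Import Classical ClassicalEpsilon Lra Permutation.
From Coquelicot Require Import Coquelicot.
Import ListNotations.
Open Scope R_scope.

Lemma pd_spec v f x y z t :
  (exists l, derivable_pt_lim (line v f x y z t) (coord v x y z t) l) ->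
  derivable_pt_lim (line v f x y z t) (coord v x y z t) (pd v f x y z t).
Proof.
  intros H. unfold pd.
  destruct excluded_middle_informative as [H'|H']; [| contradiction].
  destruct (constructive_indefinite_description _ H') as [l Hl]. simpl. exact Hl.
Qed.

Lemma pd_eq v f x y z t l :
  derivable_pt_lim (line v f x y z t) (coord v x y z t) l -> pd v f x y z t = l.
Proof.
  intros H. apply (uniqueness_limite _ _ _ _ (pd_spec v f x y z t (ex_intro _ l H)) H).
Qed.

Lemma dpl_loc (F G : R -> R) c l d : 0 < d ->
  (forall s, Rabs (s - c) < d -> F s = G s) ->
  derivable_pt_lim F c l -> derivable_pt_lim G c l.
Proof.
  intros Hd Heq H eps He. destruct (H eps He) as [del Hdel].
  assert (Hm : 0 < Rmin del d) by (apply Rmin_pos; [apply cond_pos | exact Hd]).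
  exists (mkposreal _ Hm). intros h Hh0 Hh. simpl in Hh.
  rewrite <- !Heq.
  - apply Hdel; auto. apply Rlt_le_trans with (1 := Hh). apply Rmin_l.
  - replace (c - c) with 0 by ring. rewrite Rabs_R0. exact Hd.
  - replace (c + h - c) with h by ring. apply Rlt_le_trans with (1 := Hh). apply Rmin_r.
Qed.

Lemma line_loc O v f g x y z t : open4 O ->
  (forall a b c d, O a b c d -> f a b c d = g a b c d) -> O x y z t ->
  exists d, 0 < d /\ forall s, Rabs (s - coord v x y z t) < d ->
     line v f x y z t s = line v g x y z t s.
Proof.
  intros HO Hfg Hp. destruct (HO _ _ _ _ Hp) as [r [Hr Hb]].
  exists r. split; [exact Hr|]. intros s Hs.
  assert (H0 : Rabs 0 < r) by (rewrite Rabs_R0; exact Hr).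
  destruct v; simpl in *; apply Hfg; apply Hb;
    try exact Hs; unfold Rminus; rewrite Rplus_opp_r; exact H0.
Qed.

Lemma pd_ext O v f g x y z t : open4 O ->
  (forall a b c d, O a b c d -> f a b c d = g a b c d) -> O x y z t ->
  pd v f x y z t = pd v g x y z t.
Proof.
  intros HO Hfg Hp.
  destruct (line_loc O v f g x y z t HO Hfg Hp) as [d [Hd Hl]].
  destruct (classic (exists l, derivable_pt_lim (line v f x y z t) (coord v x y z t) l)) as [[l Hl1]|Hn].
  - rewrite (pd_eq _ _ _ _ _ _ _ Hl1). symmetry. apply pd_eq.
    exact (dpl_loc _ _ _ _ _ Hd Hl Hl1).
  - assert (Hn2 : ~ exists l, derivable_pt_lim (line v g x y z t) (coord v x y z t) l).
    { intros [l Hl2]. apply Hn. exists l. apply (dpl_loc (line v g x y z t) _ _ _ _ Hd); [|exact Hl2].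
      intros s Hs. symmetry. apply Hl. exact Hs. }
    unfold pd. destruct excluded_middle_informative; [contradiction|].
    destruct excluded_middle_informative; [contradiction|]. reflexivity.
Qed.

Lemma iter_pd_app ws vs f : iter_pd ws (iter_pd vs f) = iter_pd (ws ++ vs) f.
Proof. unfold iter_pd. rewrite fold_right_app. reflexivity. Qed.

Lemma smooth_iter O f vs : smooth_on O f -> smooth_on O (iter_pd vs f).
Proof. intros H ws x y z t Hp. rewrite iter_pd_app. apply H. exact Hp. Qed.

Lemma smooth_der O f vs v x y z t : smooth_on O f -> O x y z t ->
  derivable_pt_lim (line v (iter_pd vs f) x y z t) (coord v x y z t)
     (pd v (iter_pd vs f) x y z t).
Proof. intros H Hp. apply pd_spec. apply (H vs x y z t Hp). Qed.

Lemma der_Derive (F : R -> R) c l : derivable_pt_lim F c l -> Derive F c = l.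
Proof. intros H. apply is_derive_unique. apply is_derive_Reals. exact H. Qed.

Lemma clair_core (h hA hB hAB hBA : R -> R -> R) x0 y0 r : 0 < r ->
  (forall s1 s2, Rabs (s1 - x0) < r -> Rabs (s2 - y0) < r ->
     derivable_pt_lim (fun s => h s s2) s1 (hA s1 s2) /\
     derivable_pt_lim (fun s => h s1 s) s2 (hB s1 s2) /\
     derivable_pt_lim (fun s => hB s s2) s1 (hAB s1 s2) /\
     derivable_pt_lim (fun s => hA s1 s) s2 (hBA s1 s2)) ->
  (forall eps, 0 < eps -> exists d, 0 < d /\ forall s1 s2,
     Rabs (s1 - x0) < d -> Rabs (s2 - y0) < d -> Rabs (hAB s1 s2 - hAB x0 y0) < eps) ->
  (forall eps, 0 < eps -> exists d, 0 < d /\ forall s1 s2,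
     Rabs (s1 - x0) < d -> Rabs (s2 - y0) < d -> Rabs (hBA s1 s2 - hBA x0 y0) < eps) ->
  hAB x0 y0 = hBA x0 y0.
Proof.
  intros Hr Hd C1 C2.
  assert (L1 : forall u v, Rabs (u - x0) < r -> Rabs (v - y0) < r ->
     derivable_pt_lim (fun z => Derive (fun t => h z t) v) u (hAB u v)).
  { intros u v Hu Hv. apply (dpl_loc (fun s => hB s v) _ _ _ (r - Rabs (u - x0))).
    - lra.
    - intros s Hs. symmetry. apply der_Derive.
      assert (Rabs (s - x0) < r).
      { replace (s - x0) with ((s - u) + (u - x0)) by ring.
        eapply Rle_lt_trans; [apply Rabs_triang|]. lra. }
      apply (Hd s v H Hv).
    - apply (Hd u v Hu Hv). }
  assert (L2 : forall u v, Rabs (u - x0) < r -> Rabs (v - y0) < r ->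
     derivable_pt_lim (fun z => Derive (fun t => h t z) u) v (hBA u v)).
  { intros u v Hu Hv. apply (dpl_loc (fun s => hA u s) _ _ _ (r - Rabs (v - y0))).
    - lra.
    - intros s Hs. symmetry. apply der_Derive.
      assert (Rabs (s - y0) < r).
      { replace (s - y0) with ((s - v) + (v - y0)) by ring.
        eapply Rle_lt_trans; [apply Rabs_triang|]. lra. }
      apply (Hd u s Hu H).
    - apply (Hd u v Hu Hv). }
  assert (H0 : Rabs (x0 - x0) < r) by (unfold Rminus; rewrite Rplus_opp_r, Rabs_R0; exact Hr).
  assert (H0' : Rabs (y0 - y0) < r) by (unfold Rminus; rewrite Rplus_opp_r, Rabs_R0; exact Hr).
  rewrite <- (der_Derive _ _ _ (L1 x0 y0 H0 H0')).
  rewrite <- (der_Derive _ _ _ (L2 x0 y0 H0 H0')).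
  apply Schwarz.
  - exists (mkposreal r Hr). intros u v Hu Hv. simpl in Hu, Hv.
    destruct (Hd u v Hu Hv) as [A1 [A2 _]].
    split; [exists (hA u v); apply is_derive_Reals; exact A1|].
    split; [exists (hB u v); apply is_derive_Reals; exact A2|].
    split; [exists (hAB u v); apply is_derive_Reals; apply L1; auto|].
    exists (hBA u v); apply is_derive_Reals; apply L2; auto.
  - intros eps. destruct (C1 eps (cond_pos eps)) as [d [Hd0 Hdd]].
    assert (Hm : 0 < Rmin d r) by (apply Rmin_pos; lra).
    exists (mkposreal _ Hm). intros u v Hu Hv. simpl in Hu, Hv.
    assert (Hu1 : Rabs (u - x0) < r) by (eapply Rlt_le_trans; [exact Hu| apply Rmin_r]).
    assert (Hv1 : Rabs (v - y0) < r) by (eapply Rlt_le_trans; [exact Hv| apply Rmin_r]).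
    rewrite (der_Derive _ _ _ (L1 u v Hu1 Hv1)), (der_Derive _ _ _ (L1 x0 y0 H0 H0')).
    apply Hdd; [apply (Rlt_le_trans _ _ _ Hu); apply Rmin_l | apply (Rlt_le_trans _ _ _ Hv); apply Rmin_l].
  - intros eps. destruct (C2 eps (cond_pos eps)) as [d [Hd0 Hdd]].
    assert (Hm : 0 < Rmin d r) by (apply Rmin_pos; lra).
    exists (mkposreal _ Hm). intros u v Hu Hv. simpl in Hu, Hv.
    assert (Hu1 : Rabs (u - x0) < r) by (eapply Rlt_le_trans; [exact Hu| apply Rmin_r]).
    assert (Hv1 : Rabs (v - y0) < r) by (eapply Rlt_le_trans; [exact Hv| apply Rmin_r]).
    rewrite (der_Derive _ _ _ (L2 u v Hu1 Hv1)), (der_Derive _ _ _ (L2 x0 y0 H0 H0')).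
    apply Hdd; [apply (Rlt_le_trans _ _ _ Hu); apply Rmin_l | apply (Rlt_le_trans _ _ _ Hv); apply Rmin_l].
Qed.

Lemma Rabs_self_lt a r : 0 < r -> Rabs (a - a) < r.
Proof. intros. unfold Rminus. rewrite Rplus_opp_r, Rabs_R0. exact H. Qed.

Lemma clairaut O g a b x y z t : open4 O -> smooth_on O g -> O x y z t ->
  pd a (pd b g) x y z t = pd b (pd a g) x y z t.
Proof.
  intros HO Hg Hp. destruct (HO _ _ _ _ Hp) as [r [Hr Hb]].
  destruct a, b; try reflexivity.
  - apply (clair_core (fun s1 s2 => g s1 s2 z t) (fun s1 s2 => pd VX g s1 s2 z t) (fun s1 s2 => pd VY g s1 s2 z t) (fun s1 s2 => pd VX (pd VY g) s1 s2 z t) (fun s1 s2 => pd VY (pd VX g) s1 s2 z t) x y r Hr).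
    + intros s1 s2 H1 H2.
      assert (Hq : O s1 s2 z t) by (apply Hb; first [exact H1 | exact H2 | apply Rabs_self_lt; exact Hr]).
      split; [exact (smooth_der O g [] VX s1 s2 z t Hg Hq)|].
      split; [exact (smooth_der O g [] VY s1 s2 z t Hg Hq)|].
      split; [exact (smooth_der O g [VY] VX s1 s2 z t Hg Hq)|].
      exact (smooth_der O g [VX] VY s1 s2 z t Hg Hq).
    + intros eps He. destruct (proj1 (Hg [VX;VY] x y z t Hp) eps He) as [d [Hd Hc]].
      exists d. split; [exact Hd|]. intros s1 s2 H1 H2. apply Hc; first [exact H1 | exact H2 | apply Rabs_self_lt; exact Hd].
    + intros eps He. destruct (proj1 (Hg [VY;VX] x y z t Hp) eps He) as [d [Hd Hc]].
      exists d. split; [exact Hd|]. intros s1 s2 H1 H2. apply Hc; first [exact H1 | exact H2 | apply Rabs_self_lt; exact Hd].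
  - apply (clair_core (fun s1 s2 => g s1 y s2 t) (fun s1 s2 => pd VX g s1 y s2 t) (fun s1 s2 => pd VZ g s1 y s2 t) (fun s1 s2 => pd VX (pd VZ g) s1 y s2 t) (fun s1 s2 => pd VZ (pd VX g) s1 y s2 t) x z r Hr).
    + intros s1 s2 H1 H2.
      assert (Hq : O s1 y s2 t) by (apply Hb; first [exact H1 | exact H2 | apply Rabs_self_lt; exact Hr]).
      split; [exact (smooth_der O g [] VX s1 y s2 t Hg Hq)|].
      split; [exact (smooth_der O g [] VZ s1 y s2 t Hg Hq)|].
      split; [exact (smooth_der O g [VZ] VX s1 y s2 t Hg Hq)|].
      exact (smooth_der O g [VX] VZ s1 y s2 t Hg Hq).
    + intros eps He. destruct (proj1 (Hg [VX;VZ] x y z t Hp) eps He) as [d [Hd Hc]].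
      exists d. split; [exact Hd|]. intros s1 s2 H1 H2. apply Hc; first [exact H1 | exact H2 | apply Rabs_self_lt; exact Hd].
    + intros eps He. destruct (proj1 (Hg [VZ;VX] x y z t Hp) eps He) as [d [Hd Hc]].
      exists d. split; [exact Hd|]. intros s1 s2 H1 H2. apply Hc; first [exact H1 | exact H2 | apply Rabs_self_lt; exact Hd].
  - apply (clair_core (fun s1 s2 => g s1 y z s2) (fun s1 s2 => pd VX g s1 y z s2) (fun s1 s2 => pd VT g s1 y z s2) (fun s1 s2 => pd VX (pd VT g) s1 y z s2) (fun s1 s2 => pd VT (pd VX g) s1 y z s2) x t r Hr).
    + intros s1 s2 H1 H2.
      assert (Hq : O s1 y z s2) by (apply Hb; first [exact H1 | exact H2 | apply Rabs_self_lt; exact Hr]).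
      split; [exact (smooth_der O g [] VX s1 y z s2 Hg Hq)|].
      split; [exact (smooth_der O g [] VT s1 y z s2 Hg Hq)|].
      split; [exact (smooth_der O g [VT] VX s1 y z s2 Hg Hq)|].
      exact (smooth_der O g [VX] VT s1 y z s2 Hg Hq).
    + intros eps He. destruct (proj1 (Hg [VX;VT] x y z t Hp) eps He) as [d [Hd Hc]].
      exists d. split; [exact Hd|]. intros s1 s2 H1 H2. apply Hc; first [exact H1 | exact H2 | apply Rabs_self_lt; exact Hd].
    + intros eps He. destruct (proj1 (Hg [VT;VX] x y z t Hp) eps He) as [d [Hd Hc]].
      exists d. split; [exact Hd|]. intros s1 s2 H1 H2. apply Hc; first [exact H1 | exact H2 | apply Rabs_self_lt; exact Hd].
  - apply (clair_core (fun s1 s2 => g s2 s1 z t) (fun s1 s2 => pd VY g s2 s1 z t) (fun s1 s2 => pd VX g s2 s1 z t) (fun s1 s2 => pd VY (pd VX g) s2 s1 z t) (fun s1 s2 => pd VX (pd VY g) s2 s1 z t) y x r Hr).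
    + intros s1 s2 H1 H2.
      assert (Hq : O s2 s1 z t) by (apply Hb; first [exact H1 | exact H2 | apply Rabs_self_lt; exact Hr]).
      split; [exact (smooth_der O g [] VY s2 s1 z t Hg Hq)|].
      split; [exact (smooth_der O g [] VX s2 s1 z t Hg Hq)|].
      split; [exact (smooth_der O g [VX] VY s2 s1 z t Hg Hq)|].
      exact (smooth_der O g [VY] VX s2 s1 z t Hg Hq).
    + intros eps He. destruct (proj1 (Hg [VY;VX] x y z t Hp) eps He) as [d [Hd Hc]].
      exists d. split; [exact Hd|]. intros s1 s2 H1 H2. apply Hc; first [exact H1 | exact H2 | apply Rabs_self_lt; exact Hd].
    + intros eps He. destruct (proj1 (Hg [VX;VY] x y z t Hp) eps He) as [d [Hd Hc]].
      exists d. split; [exact Hd|]. intros s1 s2 H1 H2. apply Hc; first [exact H1 | exact H2 | apply Rabs_self_lt; exact Hd].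
  - apply (clair_core (fun s1 s2 => g x s1 s2 t) (fun s1 s2 => pd VY g x s1 s2 t) (fun s1 s2 => pd VZ g x s1 s2 t) (fun s1 s2 => pd VY (pd VZ g) x s1 s2 t) (fun s1 s2 => pd VZ (pd VY g) x s1 s2 t) y z r Hr).
    + intros s1 s2 H1 H2.
      assert (Hq : O x s1 s2 t) by (apply Hb; first [exact H1 | exact H2 | apply Rabs_self_lt; exact Hr]).
      split; [exact (smooth_der O g [] VY x s1 s2 t Hg Hq)|].
      split; [exact (smooth_der O g [] VZ x s1 s2 t Hg Hq)|].
      split; [exact (smooth_der O g [VZ] VY x s1 s2 t Hg Hq)|].
      exact (smooth_der O g [VY] VZ x s1 s2 t Hg Hq).
    + intros eps He. destruct (proj1 (Hg [VY;VZ] x y z t Hp) eps He) as [d [Hd Hc]].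
      exists d. split; [exact Hd|]. intros s1 s2 H1 H2. apply Hc; first [exact H1 | exact H2 | apply Rabs_self_lt; exact Hd].
    + intros eps He. destruct (proj1 (Hg [VZ;VY] x y z t Hp) eps He) as [d [Hd Hc]].
      exists d. split; [exact Hd|]. intros s1 s2 H1 H2. apply Hc; first [exact H1 | exact H2 | apply Rabs_self_lt; exact Hd].
  - apply (clair_core (fun s1 s2 => g x s1 z s2) (fun s1 s2 => pd VY g x s1 z s2) (fun s1 s2 => pd VT g x s1 z s2) (fun s1 s2 => pd VY (pd VT g) x s1 z s2) (fun s1 s2 => pd VT (pd VY g) x s1 z s2) y t r Hr).
    + intros s1 s2 H1 H2.
      assert (Hq : O x s1 z s2) by (apply Hb; first [exact H1 | exact H2 | apply Rabs_self_lt; exact Hr]).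
      split; [exact (smooth_der O g [] VY x s1 z s2 Hg Hq)|].
      split; [exact (smooth_der O g [] VT x s1 z s2 Hg Hq)|].
      split; [exact (smooth_der O g [VT] VY x s1 z s2 Hg Hq)|].
      exact (smooth_der O g [VY] VT x s1 z s2 Hg Hq).
    + intros eps He. destruct (proj1 (Hg [VY;VT] x y z t Hp) eps He) as [d [Hd Hc]].
      exists d. split; [exact Hd|]. intros s1 s2 H1 H2. apply Hc; first [exact H1 | exact H2 | apply Rabs_self_lt; exact Hd].
    + intros eps He. destruct (proj1 (Hg [VT;VY] x y z t Hp) eps He) as [d [Hd Hc]].
      exists d. split; [exact Hd|]. intros s1 s2 H1 H2. apply Hc; first [exact H1 | exact H2 | apply Rabs_self_lt; exact Hd].
  - apply (clair_core (fun s1 s2 => g s2 y s1 t) (fun s1 s2 => pd VZ g s2 y s1 t) (fun s1 s2 => pd VX g s2 y s1 t) (fun s1 s2 => pd VZ (pd VX g) s2 y s1 t) (fun s1 s2 => pd VX (pd VZ g) s2 y s1 t) z x r Hr).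
    + intros s1 s2 H1 H2.
      assert (Hq : O s2 y s1 t) by (apply Hb; first [exact H1 | exact H2 | apply Rabs_self_lt; exact Hr]).
      split; [exact (smooth_der O g [] VZ s2 y s1 t Hg Hq)|].
      split; [exact (smooth_der O g [] VX s2 y s1 t Hg Hq)|].
      split; [exact (smooth_der O g [VX] VZ s2 y s1 t Hg Hq)|].
      exact (smooth_der O g [VZ] VX s2 y s1 t Hg Hq).
    + intros eps He. destruct (proj1 (Hg [VZ;VX] x y z t Hp) eps He) as [d [Hd Hc]].
      exists d. split; [exact Hd|]. intros s1 s2 H1 H2. apply Hc; first [exact H1 | exact H2 | apply Rabs_self_lt; exact Hd].
    + intros eps He. destruct (proj1 (Hg [VX;VZ] x y z t Hp) eps He) as [d [Hd Hc]].
      exists d. split; [exact Hd|]. intros s1 s2 H1 H2. apply Hc; first [exact H1 | exact H2 | apply Rabs_self_lt; exact Hd].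
  - apply (clair_core (fun s1 s2 => g x s2 s1 t) (fun s1 s2 => pd VZ g x s2 s1 t) (fun s1 s2 => pd VY g x s2 s1 t) (fun s1 s2 => pd VZ (pd VY g) x s2 s1 t) (fun s1 s2 => pd VY (pd VZ g) x s2 s1 t) z y r Hr).
    + intros s1 s2 H1 H2.
      assert (Hq : O x s2 s1 t) by (apply Hb; first [exact H1 | exact H2 | apply Rabs_self_lt; exact Hr]).
      split; [exact (smooth_der O g [] VZ x s2 s1 t Hg Hq)|].
      split; [exact (smooth_der O g [] VY x s2 s1 t Hg Hq)|].
      split; [exact (smooth_der O g [VY] VZ x s2 s1 t Hg Hq)|].
      exact (smooth_der O g [VZ] VY x s2 s1 t Hg Hq).
    + intros eps He. destruct (proj1 (Hg [VZ;VY] x y z t Hp) eps He) as [d [Hd Hc]].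
      exists d. split; [exact Hd|]. intros s1 s2 H1 H2. apply Hc; first [exact H1 | exact H2 | apply Rabs_self_lt; exact Hd].
    + intros eps He. destruct (proj1 (Hg [VY;VZ] x y z t Hp) eps He) as [d [Hd Hc]].
      exists d. split; [exact Hd|]. intros s1 s2 H1 H2. apply Hc; first [exact H1 | exact H2 | apply Rabs_self_lt; exact Hd].
  - apply (clair_core (fun s1 s2 => g x y s1 s2) (fun s1 s2 => pd VZ g x y s1 s2) (fun s1 s2 => pd VT g x y s1 s2) (fun s1 s2 => pd VZ (pd VT g) x y s1 s2) (fun s1 s2 => pd VT (pd VZ g) x y s1 s2) z t r Hr).
    + intros s1 s2 H1 H2.
      assert (Hq : O x y s1 s2) by (apply Hb; first [exact H1 | exact H2 | apply Rabs_self_lt; exact Hr]).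
      split; [exact (smooth_der O g [] VZ x y s1 s2 Hg Hq)|].
      split; [exact (smooth_der O g [] VT x y s1 s2 Hg Hq)|].
      split; [exact (smooth_der O g [VT] VZ x y s1 s2 Hg Hq)|].
      exact (smooth_der O g [VZ] VT x y s1 s2 Hg Hq).
    + intros eps He. destruct (proj1 (Hg [VZ;VT] x y z t Hp) eps He) as [d [Hd Hc]].
      exists d. split; [exact Hd|]. intros s1 s2 H1 H2. apply Hc; first [exact H1 | exact H2 | apply Rabs_self_lt; exact Hd].
    + intros eps He. destruct (proj1 (Hg [VT;VZ] x y z t Hp) eps He) as [d [Hd Hc]].
      exists d. split; [exact Hd|]. intros s1 s2 H1 H2. apply Hc; first [exact H1 | exact H2 | apply Rabs_self_lt; exact Hd].
  - apply (clair_core (fun s1 s2 => g s2 y z s1) (fun s1 s2 => pd VT g s2 y z s1) (fun s1 s2 => pd VX g s2 y z s1) (fun s1 s2 => pd VT (pd VX g) s2 y z s1) (fun s1 s2 => pd VX (pd VT g) s2 y z s1) t x r Hr).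
    + intros s1 s2 H1 H2.
      assert (Hq : O s2 y z s1) by (apply Hb; first [exact H1 | exact H2 | apply Rabs_self_lt; exact Hr]).
      split; [exact (smooth_der O g [] VT s2 y z s1 Hg Hq)|].
      split; [exact (smooth_der O g [] VX s2 y z s1 Hg Hq)|].
      split; [exact (smooth_der O g [VX] VT s2 y z s1 Hg Hq)|].
      exact (smooth_der O g [VT] VX s2 y z s1 Hg Hq).
    + intros eps He. destruct (proj1 (Hg [VT;VX] x y z t Hp) eps He) as [d [Hd Hc]].
      exists d. split; [exact Hd|]. intros s1 s2 H1 H2. apply Hc; first [exact H1 | exact H2 | apply Rabs_self_lt; exact Hd].
    + intros eps He. destruct (proj1 (Hg [VX;VT] x y z t Hp) eps He) as [d [Hd Hc]].
      exists d. split; [exact Hd|]. intros s1 s2 H1 H2. apply Hc; first [exact H1 | exact H2 | apply Rabs_self_lt; exact Hd].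
  - apply (clair_core (fun s1 s2 => g x s2 z s1) (fun s1 s2 => pd VT g x s2 z s1) (fun s1 s2 => pd VY g x s2 z s1) (fun s1 s2 => pd VT (pd VY g) x s2 z s1) (fun s1 s2 => pd VY (pd VT g) x s2 z s1) t y r Hr).
    + intros s1 s2 H1 H2.
      assert (Hq : O x s2 z s1) by (apply Hb; first [exact H1 | exact H2 | apply Rabs_self_lt; exact Hr]).
      split; [exact (smooth_der O g [] VT x s2 z s1 Hg Hq)|].
      split; [exact (smooth_der O g [] VY x s2 z s1 Hg Hq)|].
      split; [exact (smooth_der O g [VY] VT x s2 z s1 Hg Hq)|].
      exact (smooth_der O g [VT] VY x s2 z s1 Hg Hq).
    + intros eps He. destruct (proj1 (Hg [VT;VY] x y z t Hp) eps He) as [d [Hd Hc]].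
      exists d. split; [exact Hd|]. intros s1 s2 H1 H2. apply Hc; first [exact H1 | exact H2 | apply Rabs_self_lt; exact Hd].
    + intros eps He. destruct (proj1 (Hg [VY;VT] x y z t Hp) eps He) as [d [Hd Hc]].
      exists d. split; [exact Hd|]. intros s1 s2 H1 H2. apply Hc; first [exact H1 | exact H2 | apply Rabs_self_lt; exact Hd].
  - apply (clair_core (fun s1 s2 => g x y s2 s1) (fun s1 s2 => pd VT g x y s2 s1) (fun s1 s2 => pd VZ g x y s2 s1) (fun s1 s2 => pd VT (pd VZ g) x y s2 s1) (fun s1 s2 => pd VZ (pd VT g) x y s2 s1) t z r Hr).
    + intros s1 s2 H1 H2.
      assert (Hq : O x y s2 s1) by (apply Hb; first [exact H1 | exact H2 | apply Rabs_self_lt; exact Hr]).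
      split; [exact (smooth_der O g [] VT x y s2 s1 Hg Hq)|].
      split; [exact (smooth_der O g [] VZ x y s2 s1 Hg Hq)|].
      split; [exact (smooth_der O g [VZ] VT x y s2 s1 Hg Hq)|].
      exact (smooth_der O g [VT] VZ x y s2 s1 Hg Hq).
    + intros eps He. destruct (proj1 (Hg [VT;VZ] x y z t Hp) eps He) as [d [Hd Hc]].
      exists d. split; [exact Hd|]. intros s1 s2 H1 H2. apply Hc; first [exact H1 | exact H2 | apply Rabs_self_lt; exact Hd].
    + intros eps He. destruct (proj1 (Hg [VZ;VT] x y z t Hp) eps He) as [d [Hd Hc]].
      exists d. split; [exact Hd|]. intros s1 s2 H1 H2. apply Hc; first [exact H1 | exact H2 | apply Rabs_self_lt; exact Hd].
Qed.

Definition vrank (v : Defs.var) : nat := match v with VX => 0 | VY => 1 | VZ => 2 | VT => 3 end.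
Fixpoint ins (v : Defs.var) (vs : list Defs.var) : list Defs.var :=
  match vs with
  | [] => [v]
  | w :: ws => if Nat.leb (vrank v) (vrank w) then v :: w :: ws else w :: ins v ws
  end.

Lemma ins_perm v vs : Permutation (v :: vs) (ins v vs).
Proof.
  induction vs as [|w ws IH]; simpl; [apply Permutation_refl|].
  destruct (Nat.leb (vrank v) (vrank w)); [apply Permutation_refl|].
  eapply perm_trans; [apply perm_swap|]. apply perm_skip. exact IH.
Qed.

Lemma iter_pd_perm O f vs vs' : open4 O -> smooth_on O f -> Permutation vs vs' ->
  forall x y z t, O x y z t -> iter_pd vs f x y z t = iter_pd vs' f x y z t.
Proof.
  intros HO Hf HP. induction HP; intros a b c d Hq.
  - reflexivity.
  - simpl. apply (pd_ext O); auto.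
  - simpl. apply (clairaut O); auto. apply smooth_iter; auto.
  - rewrite IHHP1, IHHP2; auto.
Qed.

Inductive ex :=
| EAt (f : fn) (vs : list Defs.var)
| ECst (c : R)
| EAdd (a b : ex) | ESub (a b : ex) | EMul (a b : ex) | EDiv (a b : ex)
| EOpp (a : ex) | EPw (a : ex) (n : nat).

Fixpoint ev (e : ex) : fn :=
  match e with
  | EAt f vs => iter_pd vs f
  | ECst c => fun _ _ _ _ => c
  | EAdd a b => fun x y z t => ev a x y z t + ev b x y z t
  | ESub a b => fun x y z t => ev a x y z t - ev b x y z t
  | EMul a b => fun x y z t => ev a x y z t * ev b x y z t
  | EDiv a b => fun x y z t => ev a x y z t / ev b x y z t
  | EOpp a => fun x y z t => - ev a x y z t
  | EPw a n => fun x y z t => ev a x y z t ^ n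
  end.

Fixpoint deriv (v : Defs.var) (e : ex) : ex :=
  match e with
  | EAt f vs => EAt f (ins v vs)
  | ECst _ => ECst 0
  | EAdd a b => EAdd (deriv v a) (deriv v b)
  | ESub a b => ESub (deriv v a) (deriv v b)
  | EMul a b => EAdd (EMul (deriv v a) b) (EMul a (deriv v b))
  | EDiv a b => EDiv (ESub (EMul (deriv v a) b) (EMul (deriv v b) a)) (EMul b b)
  | EOpp a => EOpp (deriv v a)
  | EPw a n => EMul (EMul (ECst (INR n)) (EPw a (pred n))) (deriv v a)
  end.

Fixpoint wf (O : R -> R -> R -> R -> Prop) (x y z t : R) (e : ex) : Prop :=
  match e with
  | EAt f vs => smooth_on O f
  | ECst _ => True
  | EAdd a b | ESub a b | EMul a b => wf O x y z t a /\ wf O x y z t b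
  | EDiv a b => wf O x y z t a /\ wf O x y z t b /\ ev b x y z t <> 0
  | EOpp a | EPw a _ => wf O x y z t a
  end.

Lemma dpl_eqv F c l l' : derivable_pt_lim F c l -> l = l' -> derivable_pt_lim F c l'.
Proof. intros H <-. exact H. Qed.

Lemma deriv_ok O v x y z t e : open4 O -> O x y z t -> wf O x y z t e ->
  derivable_pt_lim (line v (ev e) x y z t) (coord v x y z t) (ev (deriv v e) x y z t).
Proof.
  intros HO Hp. induction e; simpl ev; simpl deriv; simpl wf; intros Hw.
  - eapply dpl_eqv; [apply (smooth_der O f vs v x y z t Hw Hp)|].
    change (pd v (iter_pd vs f) x y z t) with (iter_pd (v :: vs) f x y z t).
    apply (iter_pd_perm O f); auto. apply ins_perm.
  - destruct v; exact (derivable_pt_lim_const c _).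
  - destruct Hw as [H1 H2]. specialize (IHe1 H1). specialize (IHe2 H2).
    destruct v; exact (derivable_pt_lim_plus _ _ _ _ _ IHe1 IHe2).
  - destruct Hw as [H1 H2]. specialize (IHe1 H1). specialize (IHe2 H2).
    destruct v; exact (derivable_pt_lim_minus _ _ _ _ _ IHe1 IHe2).
  - destruct Hw as [H1 H2]. specialize (IHe1 H1). specialize (IHe2 H2).
    destruct v; exact (derivable_pt_lim_mult _ _ _ _ _ IHe1 IHe2).
  - destruct Hw as [H1 [H2 H3]]. specialize (IHe1 H1). specialize (IHe2 H2).
    destruct v; exact (derivable_pt_lim_div _ _ _ _ _ IHe1 IHe2 H3).
  - specialize (IHe Hw). destruct v; exact (derivable_pt_lim_opp _ _ _ IHe).
  - specialize (IHe Hw). destruct v; simpl in *;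
    (eapply dpl_eqv; [apply (derivable_pt_lim_comp _ (fun s => s ^ n)); [exact IHe | apply derivable_pt_lim_pow] | reflexivity]).
Qed.

Lemma pdE O v e x y z t : open4 O -> O x y z t -> wf O x y z t e ->
  pd v (ev e) x y z t = ev (deriv v e) x y z t.
Proof. intros HO Hp Hw. apply pd_eq. apply (deriv_ok O); assumption. Qed.

Lemma pd_zero O v f x y z t : open4 O ->
  (forall a b c d, O a b c d -> f a b c d = 0) -> O x y z t -> pd v f x y z t = 0.
Proof.
  intros HO Hf Hp. rewrite (pd_ext O v f (fun _ _ _ _ => 0) x y z t HO Hf Hp).
  apply pd_eq. destruct v; exact (derivable_pt_lim_const 0 _).
Qed.

Definition em u := EDiv (ESub (EAt u [VY]) (EAt u [VZ])) (EAt u [VX]).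
Definition en u := EDiv (ESub (EAt u [VZ]) (EAt u [VT])) (EAt u [VX]).
Definition etz u := EDiv (ESub (EAt u [VT]) (EAt u [VZ])) (EAt u [VX]).
Definition edm u U := ESub (EDiv (ESub (EAt U [VY]) (EAt U [VZ])) (EAt u [VX]))
   (EDiv (EMul (ESub (EAt u [VY]) (EAt u [VZ])) (EAt U [VX])) (EPw (EAt u [VX]) 2)).
Definition edn u U := ESub (EDiv (ESub (EAt U [VZ]) (EAt U [VT])) (EAt u [VX]))
   (EDiv (EMul (ESub (EAt u [VZ]) (EAt u [VT])) (EAt U [VX])) (EPw (EAt u [VX]) 2)).
Definition ef1 a u := EDiv (ESub (EMul (ECst a) (ESub (EAt u [VX;VY]) (EAt u [VX;VZ]))) (EAt u [VX;VZ])) (EAt u [VX]).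
Definition ef2 a u := EDiv (ESub (EMul (ECst a) (ESub (EAt u [VX;VZ]) (EAt u [VX;VT]))) (EAt u [VX;VT])) (EAt u [VX]).
Definition er1 a u U := EAdd (EAdd (EMul (EMul (EOpp (EAdd (ECst 1) (ECst a))) (em u)) (EAt U [VX])) (EAt U [VY])) (EMul (ef1 a u) (EAt U [])).
Definition er2 a u U := EAdd (EAdd (EMul (EMul (EAdd (ECst 1) (ECst a)) (etz u)) (EAt U [VX])) (EAt U [VZ])) (EMul (ef2 a u) (EAt U [])).
Definition el1 a u W := EAdd (ESub (EAt W [VZ]) (EMul (EMul (ECst a) (em u)) (EAt W [VX]))) (EMul (ef1 a u) (EAt W [])).
Definition el2 a u W := EAdd (EAdd (EAt W [VT]) (EMul (EMul (ECst a) (etz u)) (EAt W [VX]))) (EMul (ef2 a u) (EAt W [])).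
Definition ecPx a u := EMul (ECst a) (em u).
Definition ecP0 a u := EOpp (ef1 a u).
Definition ecQx a u := EOpp (EMul (ECst a) (etz u)).
Definition ecQ0 a u := EOpp (ef2 a u).
Definition ePz a u U W := EAdd (EAdd (EMul (ecPx a u) (EAt W [VX])) (EMul (ecP0 a u) (EAt W []))) (er1 a u U).
Definition eQt a u U W := EAdd (EAdd (EMul (ecQx a u) (EAt W [VX])) (EMul (ecQ0 a u) (EAt W []))) (er2 a u U).
Definition eEx a u := ESub (ESub (EAdd (deriv VT (em u)) (EMul (EMul (ECst a) (em u)) (deriv VX (en u))))
   (deriv VZ (en u))) (EMul (EMul (ECst a) (en u)) (deriv VX (em u))).
Definition eL a u U := ESub (ESub (ESub (EAdd (EAdd (deriv VT (edm u U)) (EMul (EMul (ECst a) (edm u U)) (deriv VX (en u))))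
   (EMul (EMul (ECst a) (em u)) (deriv VX (edn u U)))) (deriv VZ (edn u U)))
   (EMul (EMul (ECst a) (edn u U)) (deriv VX (em u)))) (EMul (EMul (ECst a) (en u)) (deriv VX (edm u U))).
Definition eC a u U W :=
  ESub (EAdd (EAdd (EAdd (EAdd (EMul (deriv VT (ecPx a u)) (EAt W [VX])) (EMul (ecPx a u) (deriv VX (eQt a u U W))))
        (EMul (deriv VT (ecP0 a u)) (EAt W []))) (EMul (ecP0 a u) (eQt a u U W))) (deriv VT (er1 a u U)))
      (EAdd (EAdd (EAdd (EAdd (EMul (deriv VZ (ecQx a u)) (EAt W [VX])) (EMul (ecQx a u) (deriv VX (ePz a u U W))))
        (EMul (deriv VZ (ecQ0 a u)) (EAt W []))) (EMul (ecQ0 a u) (ePz a u U W))) (deriv VZ (er2 a u U))).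

Ltac nz Hux := repeat first [ split | (apply Hux; assumption) | apply pow_nonzero | apply Rmult_integral_contrapositive_currified | lra ].
Ltac solve_wf Hux := cbn [wf ev iter_pd fold_right deriv ins vrank Nat.leb em en etz edm edn ef1 ef2 er1 er2 el1 el2 ecPx ecP0 ecQx ecQ0 ePz eQt eEx eL eC]; repeat match goal with |- _ /\ _ => split end; try exact I; try assumption; nz Hux.

Lemma eq_star_ev a O u x y z t : open4 O -> smooth_on O u ->
  (forall x y z t, O x y z t -> PDx u x y z t <> 0) -> O x y z t ->
  eq_star a u x y z t = ev (eEx a u) x y z t.
Proof.
  intros HO Hu Hux Hp. unfold eq_star. change (m_of u) with (ev (em u)). change (n_of u) with (ev (en u)).
  unfold PDt, PDx, PDz. rewrite !(pdE O) by solve_wf Hux. reflexivity.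
Qed.

Lemma ell_ev a O u U x y z t : open4 O -> smooth_on O u -> smooth_on O U ->
  (forall x y z t, O x y z t -> PDx u x y z t <> 0) -> O x y z t ->
  ell a u U x y z t = ev (eL a u U) x y z t.
Proof.
  intros HO Hu HU Hux Hp. unfold ell. change (m_of u) with (ev (em u)). change (n_of u) with (ev (en u)).
  change (delta_m u U) with (ev (edm u U)). change (delta_n u U) with (ev (edn u U)).
  unfold PDt, PDx, PDz. rewrite !(pdE O) by solve_wf Hux. reflexivity.
Qed.

Lemma compat_ev a O u U W x y z t : open4 O -> smooth_on O u -> smooth_on O U -> smooth_on O W ->
  (forall x y z t, O x y z t -> PDx u x y z t <> 0) -> O x y z t ->
  compat_expr a u U W x y z t = ev (eC a u U W) x y z t.
Proof.
  intros HO Hu HU HW Hux Hp. unfold compat_expr.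
  change (cPx a u) with (ev (ecPx a u)). change (cP0 a u) with (ev (ecP0 a u)).
  change (cQx a u) with (ev (ecQx a u)). change (cQ0 a u) with (ev (ecQ0 a u)).
  change (Qt a u U W) with (ev (eQt a u U W)). change (Pz a u U W) with (ev (ePz a u U W)).
  change (rhs1 a u U) with (ev (er1 a u U)). change (rhs2 a u U) with (ev (er2 a u U)).
  unfold PDt, PDx, PDz. rewrite !(pdE O) by solve_wf Hux. reflexivity.
Qed.
Ltac cbnall := cbn [wf ev iter_pd fold_right deriv ins vrank Nat.leb em en etz edm edn ef1 ef2 er1 er2 el1 el2 ecPx ecP0 ecQx ecQ0 ePz eQt eEx eL eC pred INR] in *.

Lemma partA a O u U W x y z t : open4 O -> smooth_on O u ->
  (forall x y z t, O x y z t -> PDx u x y z t <> 0) ->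
  (forall x y z t, O x y z t -> eq_star a u x y z t = 0) -> smooth_on O U ->
  (forall x y z t, O x y z t -> ell a u U x y z t = 0) -> smooth_on O W -> O x y z t ->
  compat_expr a u U W x y z t = 0.
Proof.
  intros HO Hu Hux HEq HU HEll HW Hp.
  assert (HE : ev (eEx a u) x y z t = 0) by (rewrite <- (eq_star_ev a O); auto).
  assert (HDE : ev (deriv VX (eEx a u)) x y z t = 0).
  { rewrite <- (pdE O) by solve_wf Hux. rewrite <- (pd_zero O VX (eq_star a u) x y z t) by auto.
    symmetry; apply (pd_ext O); auto. intros; apply (eq_star_ev a O); auto. }
  assert (HL : ev (eL a u U) x y z t = 0) by (rewrite <- (ell_ev a O); auto).
  rewrite (compat_ev a O) by auto.
  assert (Hx : pd VX u x y z t <> 0) by (apply Hux; exact Hp).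
  cbnall.
  assert (S1 : (pd VY (pd VT U) x y z t) = (((1)*(pd VX (pd VT U) x y z t)*(pd VY u x y z t)*(pd VX u x y z t)^2 + (-1)*(pd VX (pd VT U) x y z t)*(pd VZ u x y z t)*(pd VX u x y z t)^2 + (1)*(pd VX U x y z t)*(pd VY (pd VT u) x y z t)*(pd VX u x y z t)^2 + (1)*(pd VY U x y z t)*(pd VX u x y z t)^2*(pd VX (pd VT u) x y z t) + (-1)*(pd VZ U x y z t)*(pd VX u x y z t)^2*(pd VX (pd VT u) x y z t) + (-2)*(pd VX U x y z t)*(pd VY u x y z t)*(pd VX u x y z t)*(pd VX (pd VT u) x y z t) + (2)*(pd VX U x y z t)*(pd VZ u x y z t)*(pd VX u x y z t)*(pd VX (pd VT u) x y z t) + (1)*(pd VY U x y z t)*a*(pd VX u x y z t)^2*(pd VX (pd VT u) x y z t) + (-1)*(pd VY U x y z t)*a*(pd VX u x y z t)^2*(pd VX (pd VZ u) x y z t) + (-1)*(pd VZ U x y z t)*a*(pd VX u x y z t)^2*(pd VX (pd VT u) x y z t) + (-2)*(pd VX U x y z t)*a*(pd VY u x y z t)*(pd VX u x y z t)*(pd VX (pd VT u) x y z t) + (2)*(pd VX U x y z t)*a*(pd VY u x y z t)*(pd VX u x y z t)*(pd VX (pd VZ u) x y z t) + (2)*(pd VX U x y z t)*a*(pd VZ u x y z t)*(pd VX u x y z t)*(pd VX (pd VT u) x y z t) + (1)*(pd VX (pd VT U) x y z t)*a*(pd VY u x y z t)*(pd VX u x y z t)^2 + (-1)*(pd VX (pd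 VZ U) x y z t)*a*(pd VY u x y z t)*(pd VX u x y z t)^2 + (-1)*(pd VX (pd VT U) x y z t)*a*(pd VZ u x y z t)*(pd VX u x y z t)^2 + (-1)*(pd VX (pd VZ U) x y z t)*(pd VZ u x y z t)*(pd VX u x y z t)^2 + (1)*(pd VX (pd VZ U) x y z t)*(pd VT u x y z t)*(pd VX u x y z t)^2 + (-1)*(pd VZ U x y z t)*(pd VX u x y z t)^2*(pd VX (pd VZ u) x y z t) + (1)*(pd VT U x y z t)*(pd VX u x y z t)^2*(pd VX (pd VZ u) x y z t) + (1)*(pd VZ (pd VZ U) x y z t)*(pd VX u x y z t)^3 + (-1)*(pd VX U x y z t)*(pd VZ (pd VZ u) x y z t)*(pd VX u x y z t)^2 + (2)*(pd VX U x y z t)*(pd VZ u x y z t)*(pd VX u x y z t)*(pd VX (pd VZ u) x y z t) + (-2)*(pd VX U x y z t)*(pd VT u x y z t)*(pd VX u x y z t)*(pd VX (pd VZ u) x y z t) + (1)*(pd VZ U x y z t)*a*(pd VX u x y z t)^2*(pd VX (pd VY u) x y z t) + (-1)*(pd VT U x y z t)*a*(pd VX u x y z t)^2*(pd VX (pd VY u) x y z t) + (1)*(pd VT U x y z t)*a*(pd VX u x y z t)^2*(pd VX (pd VZ u) x y z t) + (-2)*(pd VX U x y z t)*a*(pd VZ u x y z t)*(pd VX u x y z t)*(pd VX (pd VY u) x y z t) + (2)*(pd VX U x y z t)*a*(pd VT u x y z t)*(pd VX u x y z t)*(pd VX (pd VY u) x y z t) + (-2)*(pd VX U x y z t)*a*(pd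 VT u x y z t)*(pd VX u x y z t)*(pd VX (pd VZ u) x y z t) + (1)*(pd VX (pd VY U) x y z t)*a*(pd VZ u x y z t)*(pd VX u x y z t)^2 + (-1)*(pd VX (pd VY U) x y z t)*a*(pd VT u x y z t)*(pd VX u x y z t)^2 + (1)*(pd VX (pd VZ U) x y z t)*a*(pd VT u x y z t)*(pd VX u x y z t)^2)/(pd VX u x y z t)^3)).
  { apply Rminus_diag_uniq. match type of HL with ?L = _ => transitivity (((pd VX u x y z t)^4/((1)*(pd VX u x y z t)^3)) * L) end;
    [ field; nz Hux | rewrite HL; ring ]. }
  assert (S2 : (pd VX (pd VY (pd VT u)) x y z t) = (((1)*(pd VY u x y z t)*(pd VX u x y z t)^2*(pd VX (pd VX (pd VT u)) x y z t) + (-1)*(pd VZ u x y z t)*(pd VX u x y z t)^2*(pd VX (pd VX (pd VT u)) x y z t) + (1)*a*(pd VY u x y z t)*(pd VX u x y z t)^2*(pd VX (pd VX (pd VT u)) x y z t) + (-1)*a*(pd VZ u x y z t)*(pd VX u x y z t)^2*(pd VX (pd VX (pd VT u)) x y z t) + (1)*(pd VX u x y z t)^2*(pd VX (pd VT u) x y z t)*(pd VX (pd VY u) x y z t) + (1)*(pd VY (pd VT u) x y z t)*(pd VX u x y z t)^2*(pd VX (pd VX u) x y z t) + (-2)*(pd VY u x y z t)*(pd VX u x y z t)*(pd VX (pd VT u) x y z t)*(pd VX (pd VX u) x y z t) + (2)*(pd VZ u x y z t)*(pd VX u x y z t)*(pd VX (pd VT u) x y z t)*(pd VX (pd VX u)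 x y z t) + (-2)*a*(pd VY u x y z t)*(pd VX u x y z t)*(pd VX (pd VT u) x y z t)*(pd VX (pd VX u) x y z t) + (2)*a*(pd VY u x y z t)*(pd VX u x y z t)*(pd VX (pd VZ u) x y z t)*(pd VX (pd VX u) x y z t) + (2)*a*(pd VZ u x y z t)*(pd VX u x y z t)*(pd VX (pd VT u) x y z t)*(pd VX (pd VX u) x y z t) + (-1)*(pd VZ (pd VZ u) x y z t)*(pd VX u x y z t)^2*(pd VX (pd VX u) x y z t) + (2)*(pd VZ u x y z t)*(pd VX u x y z t)*(pd VX (pd VZ u) x y z t)*(pd VX (pd VX u) x y z t) + (-2)*(pd VT u x y z t)*(pd VX u x y z t)*(pd VX (pd VZ u) x y z t)*(pd VX (pd VX u) x y z t) + (-2)*a*(pd VZ u x y z t)*(pd VX u x y z t)*(pd VX (pd VY u) x y z t)*(pd VX (pd VX u) x y z t) + (2)*a*(pd VT u x y z t)*(pd VX u x y z t)*(pd VX (pd VY u) x y z t)*(pd VX (pd VX u) x y z t) + (-2)*a*(pd VT u x y z t)*(pd VX u x y z t)*(pd VX (pd VZ u) x y z t)*(pd VX (pd VX u) x y z t) + (1)*a*(pd VZ u x y z t)*(pd VX u x y z t)^2*(pd VX (pd VX (pd VY u)) x y z t) + (-1)*a*(pd VT u x y z t)*(pd VX u x y z t)^2*(pd VX (pd VX (pd VY u)) x y z t) + (-1)*a*(pd VY u x y z t)*(pd VX u x y z t)^2*(pd VX (pd VX (pd VZ u)) x y z t) + (-1)*(pd VZ u x y z t)*(pd VX u x y z t)^2*(pd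 VX (pd VX (pd VZ u)) x y z t) + (1)*(pd VT u x y z t)*(pd VX u x y z t)^2*(pd VX (pd VX (pd VZ u)) x y z t) + (1)*a*(pd VT u x y z t)*(pd VX u x y z t)^2*(pd VX (pd VX (pd VZ u)) x y z t) + (-1)*(pd VX u x y z t)^2*(pd VX (pd VZ u) x y z t)^2 + (1)*(pd VX u x y z t)^3*(pd VX (pd VZ (pd VZ u)) x y z t))/(pd VX u x y z t)^3)).
  { apply Rminus_diag_uniq. match type of HDE with ?L = _ => transitivity (((pd VX u x y z t)^4/((1)*(pd VX u x y z t)^3)) * L) end;
    [ field; nz Hux | rewrite HDE; ring ]. }
  assert (S3 : (pd VY (pd VT u) x y z t) = (((1)*(pd VY u x y z t)*(pd VX u x y z t)*(pd VX (pd VT u) x y z t) + (-1)*(pd VZ u x y z t)*(pd VX u x y z t)*(pd VX (pd VT u) x y z t) + (1)*a*(pd VY u x y z t)*(pd VX u x y z t)*(pd VX (pd VT u) x y z t) + (-1)*a*(pd VY u x y z t)*(pd VX u x y z t)*(pd VX (pd VZ u) x y z t) + (-1)*a*(pd VZ u x y z t)*(pd VX u x y z t)*(pd VX (pd VT u) x y z t) + (1)*(pd VZ (pd VZ u) x y z t)*(pd VX u x y z t)^2 + (-1)*(pd VZ u x y z t)*(pd VX u x y z t)*(pd VX (pd VZ u) x y z t) + (1)*(pd VT u x y z t)*(pd VX u x y z t)*(pd VX (pd VZ u) x y z t) + (1)*a*(pd VZ u x y z t)*(pd VX u x y z t)*(pd VX (pd VY u) x y z t) + (-1)*a*(pd VT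 u x y z t)*(pd VX u x y z t)*(pd VX (pd VY u) x y z t) + (1)*a*(pd VT u x y z t)*(pd VX u x y z t)*(pd VX (pd VZ u) x y z t))/(pd VX u x y z t)^2)).
  { apply Rminus_diag_uniq. match type of HE with ?L = _ => transitivity (((pd VX u x y z t)^3/((1)*(pd VX u x y z t)^2)) * L) end;
    [ field; nz Hux | rewrite HE; ring ]. }
  rewrite S1. rewrite S2. rewrite S3. field; nz Hux.
Qed.

Lemma partB a O u U Ut x y z t : open4 O -> smooth_on O u ->
  (forall x y z t, O x y z t -> PDx u x y z t <> 0) ->
  (forall x y z t, O x y z t -> eq_star a u x y z t = 0) -> smooth_on O U ->
  smooth_on O Ut ->
  (forall x y z t, O x y z t ->
          lhs1 a u Ut x y z t = rhs1 a u U x y z t /\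
          lhs2 a u Ut x y z t = rhs2 a u U x y z t) -> O x y z t ->
  ell a u Ut x y z t = 0.
Proof.
  intros HO Hu Hux HEq HU HUt HS Hp.
  assert (HE : ev (eEx a u) x y z t = 0) by (rewrite <- (eq_star_ev a O); auto).
  assert (HDE : ev (deriv VX (eEx a u)) x y z t = 0).
  { rewrite <- (pdE O) by solve_wf Hux. rewrite <- (pd_zero O VX (eq_star a u) x y z t) by auto.
    symmetry; apply (pd_ext O); auto. intros; apply (eq_star_ev a O); auto. }
  assert (Q1 : forall x y z t, O x y z t -> ev (el1 a u Ut) x y z t = ev (er1 a u U) x y z t)
    by (intros; apply HS; auto).
  assert (Q2 : forall x y z t, O x y z t -> ev (el2 a u Ut) x y z t = ev (er2 a u U) x y z t)
    by (intros; apply HS; auto).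
  assert (H1 : ev (el1 a u Ut) x y z t - ev (er1 a u U) x y z t = 0) by (rewrite Q1; auto; ring).
  assert (H2 : ev (el2 a u Ut) x y z t - ev (er2 a u U) x y z t = 0) by (rewrite Q2; auto; ring).
  assert (DD : forall v e1 e2, wf O x y z t e1 -> wf O x y z t e2 ->
     (forall x y z t, O x y z t -> ev e1 x y z t = ev e2 x y z t) ->
     ev (deriv v e1) x y z t - ev (deriv v e2) x y z t = 0).
  { intros v e1 e2 W1 W2 Q. rewrite <- !(pdE O) by auto.
    rewrite (pd_ext O v (ev e1) (ev e2)); auto. ring. }
  assert (HZ1 := DD VZ (el1 a u Ut) (er1 a u U) ltac:(solve_wf Hux) ltac:(solve_wf Hux) Q1).
  assert (HX1 := DD VX (el1 a u Ut) (er1 a u U) ltac:(solve_wf Hux) ltac:(solve_wf Hux) Q1).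
  assert (HX2 := DD VX (el2 a u Ut) (er2 a u U) ltac:(solve_wf Hux) ltac:(solve_wf Hux) Q2).
  assert (HY2 := DD VY (el2 a u Ut) (er2 a u U) ltac:(solve_wf Hux) ltac:(solve_wf Hux) Q2).
  clear DD.
  rewrite (ell_ev a O) by auto.
  assert (Hx : pd VX u x y z t <> 0) by (apply Hux; exact Hp).
  cbnall.
  assert (S1 : (pd VZ (pd VZ Ut) x y z t) = (((1)*(pd VX Ut x y z t)*a*(pd VY (pd VZ u) x y z t)*(pd VX u x y z t) + (-1)*(pd VX U x y z t)*a*(pd VY (pd VZ u) x y z t)*(pd VX u x y z t) + (-1)*(pd VX U x y z t)*(pd VY (pd VZ u) x y z t)*(pd VX u x y z t) + (-1)*(Ut x y z t)*a*(pd VX u x y z t)*(pd VX (pd VY (pd VZ u)) x y z t) + (1)*(U x y z t)*a*(pd VX u x y z t)*(pd VX (pd VY (pd VZ u)) x y z t) + (-1)*(pd VZ Ut x y z t)*a*(pd VX u x y z t)*(pd VX (pd VY u) x y z t) + (1)*(pd VZ Ut x y z t)*a*(pd VX u x y z t)*(pd VX (pd VZ u) x y z t) + (1)*(pd VZ U x y z t)*a*(pd VX u x y z t)*(pd VX (pd VY u) x y z t) + (-1)*(pd VZ U x y z t)*a*(pd VX u x y z t)*(pd VX (pd VZ u) x y z t) + (-1)*(pd VZ U x y z t)*(pd VX u x y z t)*(pd VX (pd VZ u) x y z t) + (1)*(Ut x y z t)*a*(pd VX u x y z t)*(pd VX (pd VZ (pd VZ u)) x y z t) + (1)*(Ut x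 y z t)*(pd VX u x y z t)*(pd VX (pd VZ (pd VZ u)) x y z t) + (-1)*(U x y z t)*a*(pd VX u x y z t)*(pd VX (pd VZ (pd VZ u)) x y z t) + (-1)*(U x y z t)*(pd VX u x y z t)*(pd VX (pd VZ (pd VZ u)) x y z t) + (1)*(pd VY (pd VZ U) x y z t)*(pd VX u x y z t)^2 + (1)*(pd VX (pd VZ Ut) x y z t)*a*(pd VY u x y z t)*(pd VX u x y z t) + (-1)*(pd VX (pd VZ Ut) x y z t)*a*(pd VZ u x y z t)*(pd VX u x y z t) + (-1)*(pd VX (pd VZ U) x y z t)*a*(pd VY u x y z t)*(pd VX u x y z t) + (1)*(pd VX (pd VZ U) x y z t)*a*(pd VZ u x y z t)*(pd VX u x y z t) + (-1)*(pd VX (pd VZ U) x y z t)*(pd VY u x y z t)*(pd VX u x y z t) + (1)*(pd VX (pd VZ U) x y z t)*(pd VZ u x y z t)*(pd VX u x y z t) + (-1)*(pd VX Ut x y z t)*a*(pd VZ (pd VZ u) x y z t)*(pd VX u x y z t) + (1)*(pd VX U x y z t)*a*(pd VZ (pd VZ u) x y z t)*(pd VX u x y z t) + (1)*(pd VX U x y z t)*(pd VZ (pd VZ u) x y z t)*(pd VX u x y z t) + (1)*(pd VZ Ut x y z t)*(pd VX u x y z t)*(pd VX (pd VZ u) x y z t) + (-1)*(pd VX Ut x y z t)*a*(pd VY u x y z t)*(pd VX (pd VZ u) x y z t) + (1)*(pd VX Ut x y z t)*a*(pd VZ u x y z t)*(pd VX (pd VZ u) x y z t) + (1)*(Ut x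 y z t)*a*(pd VX (pd VZ u) x y z t)*(pd VX (pd VY u) x y z t) + (-1)*(Ut x y z t)*a*(pd VX (pd VZ u) x y z t)^2 + (-1)*(Ut x y z t)*(pd VX (pd VZ u) x y z t)^2 + (1)*(pd VX U x y z t)*a*(pd VY u x y z t)*(pd VX (pd VZ u) x y z t) + (-1)*(pd VX U x y z t)*a*(pd VZ u x y z t)*(pd VX (pd VZ u) x y z t) + (1)*(pd VX U x y z t)*(pd VY u x y z t)*(pd VX (pd VZ u) x y z t) + (-1)*(pd VX U x y z t)*(pd VZ u x y z t)*(pd VX (pd VZ u) x y z t) + (-1)*(U x y z t)*a*(pd VX (pd VZ u) x y z t)*(pd VX (pd VY u) x y z t) + (1)*(U x y z t)*a*(pd VX (pd VZ u) x y z t)^2 + (1)*(U x y z t)*(pd VX (pd VZ u) x y z t)^2)/(pd VX u x y z t)^2)).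
  { apply Rminus_diag_uniq. match type of HZ1 with ?L = _ => transitivity (((pd VX u x y z t)^2/((1)*(pd VX u x y z t)^2)) * L) end;
    [ field; nz Hux | rewrite HZ1; ring ]. }
  assert (S2 : (pd VX (pd VZ Ut) x y z t) = (((-1)*(pd VX U x y z t)*(pd VX u x y z t)*(pd VX (pd VY u) x y z t) + (-1)*(Ut x y z t)*a*(pd VX u x y z t)*(pd VX (pd VX (pd VY u)) x y z t) + (1)*(U x y z t)*a*(pd VX u x y z t)*(pd VX (pd VX (pd VY u)) x y z t) + (1)*(pd VX Ut x y z t)*(pd VX u x y z t)*(pd VX (pd VZ u) x y z t) + (1)*(Ut x y z t)*a*(pd VX u x y z t)*(pd VX (pd VX (pd VZ u)) x y z t) + (1)*(Ut x y z t)*(pd VX u x y z t)*(pd VX (pd VX (pd VZ u)) x y z t) + (-1)*(U x y z t)*a*(pd VX u x y z t)*(pd VX (pd VX (pd VZ u)) x y z t) + (-1)*(U x y z t)*(pd VX u x y z t)*(pd VX (pd VX (pd VZ u)) x y z t) + (1)*(pd VX (pd VY U) x y z t)*(pd VX u x y z t)^2 + (1)*(pd VX (pd VX Ut) x y z t)*a*(pd VY u x y z t)*(pd VX u x y z t) + (-1)*(pd VX (pd VX Ut) x y z t)*a*(pd VZ u x y z t)*(pd VX u x y z t) + (-1)*(pd VX (pd VX U) x y z t)*a*(pd VY u x y z t)*(pd VX u x y z t) + (1)*(pd VX (pd VX U) x y z t)*a*(pd VZ u x y z t)*(pd VX u x y z t) + (-1)*(pd VX (pd VX U) x y z t)*(pd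 VY u x y z t)*(pd VX u x y z t) + (1)*(pd VX (pd VX U) x y z t)*(pd VZ u x y z t)*(pd VX u x y z t) + (-1)*(pd VX Ut x y z t)*a*(pd VY u x y z t)*(pd VX (pd VX u) x y z t) + (1)*(pd VX Ut x y z t)*a*(pd VZ u x y z t)*(pd VX (pd VX u) x y z t) + (1)*(Ut x y z t)*a*(pd VX (pd VY u) x y z t)*(pd VX (pd VX u) x y z t) + (-1)*(Ut x y z t)*a*(pd VX (pd VZ u) x y z t)*(pd VX (pd VX u) x y z t) + (-1)*(Ut x y z t)*(pd VX (pd VZ u) x y z t)*(pd VX (pd VX u) x y z t) + (1)*(pd VX U x y z t)*a*(pd VY u x y z t)*(pd VX (pd VX u) x y z t) + (-1)*(pd VX U x y z t)*a*(pd VZ u x y z t)*(pd VX (pd VX u) x y z t) + (1)*(pd VX U x y z t)*(pd VY u x y z t)*(pd VX (pd VX u) x y z t) + (-1)*(pd VX U x y z t)*(pd VZ u x y z t)*(pd VX (pd VX u) x y z t) + (-1)*(U x y z t)*a*(pd VX (pd VY u) x y z t)*(pd VX (pd VX u) x y z t) + (1)*(U x y z t)*a*(pd VX (pd VZ u) x y z t)*(pd VX (pd VX u) x y z t) + (1)*(U x y z t)*(pd VX (pd VZ u) x y z t)*(pd VX (pd VX u) x y z t))/(pd VX u x y z t)^2)).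
  { apply Rminus_diag_uniq. match type of HX1 with ?L = _ => transitivity (((pd VX u x y z t)^2/((1)*(pd VX u x y z t)^2)) * L) end;
    [ field; nz Hux | rewrite HX1; ring ]. }
  assert (S3 : (pd VX (pd VT Ut) x y z t) = (((1)*(pd VX (pd VZ U) x y z t)*(pd VX u x y z t)^2 + (1)*(pd VX Ut x y z t)*(pd VX u x y z t)*(pd VX (pd VT u) x y z t) + (-1)*(Ut x y z t)*a*(pd VX u x y z t)*(pd VX (pd VX (pd VZ u)) x y z t) + (1)*(U x y z t)*a*(pd VX u x y z t)*(pd VX (pd VX (pd VZ u)) x y z t) + (-1)*(pd VX (pd VX Ut) x y z t)*a*(pd VT u x y z t)*(pd VX u x y z t) + (1)*(pd VX (pd VX Ut) x y z t)*a*(pd VZ u x y z t)*(pd VX u x y z t) + (1)*(pd VX (pd VX U) x y z t)*a*(pd VT u x y z t)*(pd VX u x y z t) + (-1)*(pd VX (pd VX U) x y z t)*a*(pd VZ u x y z t)*(pd VX u x y z t) + (1)*(pd VX (pd VX U) x y z t)*(pd VT u x y z t)*(pd VX u x y z t) + (-1)*(pd VX (pd VX U) x y z t)*(pd VZ u x y z t)*(pd VX u x y z t) + (-1)*(pd VX U x y z t)*(pd VX u x y z t)*(pd VX (pd VZ u) x y z t) + (1)*(Ut x y z t)*a*(pd VX u x y z t)*(pd VX (pd VX (pd VT u)) x y z t) + (1)*(Ut x y z t)*(pd VX u x y z t)*(pd VX (pd VX (pd VT u)) x y z t) + (-1)*(U x y z t)*a*(pd VX u x y z t)*(pd VX (pd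 VX (pd VT u)) x y z t) + (-1)*(U x y z t)*(pd VX u x y z t)*(pd VX (pd VX (pd VT u)) x y z t) + (1)*(pd VX Ut x y z t)*a*(pd VT u x y z t)*(pd VX (pd VX u) x y z t) + (-1)*(pd VX Ut x y z t)*a*(pd VZ u x y z t)*(pd VX (pd VX u) x y z t) + (1)*(Ut x y z t)*a*(pd VX (pd VZ u) x y z t)*(pd VX (pd VX u) x y z t) + (-1)*(Ut x y z t)*a*(pd VX (pd VT u) x y z t)*(pd VX (pd VX u) x y z t) + (-1)*(Ut x y z t)*(pd VX (pd VT u) x y z t)*(pd VX (pd VX u) x y z t) + (-1)*(pd VX U x y z t)*a*(pd VT u x y z t)*(pd VX (pd VX u) x y z t) + (1)*(pd VX U x y z t)*a*(pd VZ u x y z t)*(pd VX (pd VX u) x y z t) + (-1)*(pd VX U x y z t)*(pd VT u x y z t)*(pd VX (pd VX u) x y z t) + (1)*(pd VX U x y z t)*(pd VZ u x y z t)*(pd VX (pd VX u) x y z t) + (-1)*(U x y z t)*a*(pd VX (pd VZ u) x y z t)*(pd VX (pd VX u) x y z t) + (1)*(U x y z t)*a*(pd VX (pd VT u) x y z t)*(pd VX (pd VX u) x y z t) + (1)*(U x y z t)*(pd VX (pd VT u) x y z t)*(pd VX (pd VX u) x y z t))/(pd VX u x y z t)^2)).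
  { apply Rminus_diag_uniq. match type of HX2 with ?L = _ => transitivity (((pd VX u x y z t)^2/((1)*(pd VX u x y z t)^2)) * L) end;
    [ field; nz Hux | rewrite HX2; ring ]. }
  assert (S4 : (pd VY (pd VT Ut) x y z t) = (((1)*(pd VY (pd VZ U) x y z t)*(pd VX u x y z t)^2 + (-1)*(pd VY Ut x y z t)*a*(pd VX u x y z t)*(pd VX (pd VZ u) x y z t) + (1)*(pd VY Ut x y z t)*a*(pd VX u x y z t)*(pd VX (pd VT u) x y z t) + (1)*(pd VY Ut x y z t)*(pd VX u x y z t)*(pd VX (pd VT u) x y z t) + (1)*(pd VY U x y z t)*a*(pd VX u x y z t)*(pd VX (pd VZ u) x y z t) + (-1)*(pd VY U x y z t)*a*(pd VX u x y z t)*(pd VX (pd VT u) x y z t) + (-1)*(pd VY U x y z t)*(pd VX u x y z t)*(pd VX (pd VT u) x y z t) + (-1)*(Ut x y z t)*a*(pd VX u x y z t)*(pd VX (pd VY (pd VZ u)) x y z t) + (1)*(U x y z t)*a*(pd VX u x y z t)*(pd VX (pd VY (pd VZ u)) x y z t) + (-1)*(pd VX Ut x y z t)*a*(pd VY (pd VT u) x y z t)*(pd VX u x y z t) + (1)*(pd VX U x y z t)*a*(pd VY (pd VT u) x y z t)*(pd VX u x y z t) + (1)*(pd VX U x y z t)*(pd VY (pd VT u) x y z t)*(pd VX u x y z t) + (-1)*(pd VX (pd VY Ut) x y z t)*a*(pd VT u x y z t)*(pd VX u x y z t) + (1)*(pd VX (pd VY Ut) x y z t)*a*(pd VZ u x y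 z t)*(pd VX u x y z t) + (1)*(pd VX (pd VY U) x y z t)*a*(pd VT u x y z t)*(pd VX u x y z t) + (-1)*(pd VX (pd VY U) x y z t)*a*(pd VZ u x y z t)*(pd VX u x y z t) + (1)*(pd VX (pd VY U) x y z t)*(pd VT u x y z t)*(pd VX u x y z t) + (-1)*(pd VX (pd VY U) x y z t)*(pd VZ u x y z t)*(pd VX u x y z t) + (1)*(pd VX Ut x y z t)*a*(pd VY (pd VZ u) x y z t)*(pd VX u x y z t) + (-1)*(pd VX U x y z t)*a*(pd VY (pd VZ u) x y z t)*(pd VX u x y z t) + (-1)*(pd VX U x y z t)*(pd VY (pd VZ u) x y z t)*(pd VX u x y z t) + (1)*(Ut x y z t)*a*(pd VX u x y z t)*(pd VX (pd VY (pd VT u)) x y z t) + (1)*(Ut x y z t)*(pd VX u x y z t)*(pd VX (pd VY (pd VT u)) x y z t) + (-1)*(U x y z t)*a*(pd VX u x y z t)*(pd VX (pd VY (pd VT u)) x y z t) + (-1)*(U x y z t)*(pd VX u x y z t)*(pd VX (pd VY (pd VT u)) x y z t) + (1)*(pd VX Ut x y z t)*a*(pd VT u x y z t)*(pd VX (pd VY u) x y z t) + (-1)*(pd VX Ut x y z t)*a*(pd VZ u x y z t)*(pd VX (pd VY u) x y z t) + (1)*(Ut x y z t)*a*(pd VX (pd VZ u) x y z t)*(pd VX (pd VY u) x y z t) + (-1)*(Ut x y z t)*a*(pd VX (pd VT u) x y z t)*(pd VX (pd VY u) x y z t) + (-1)*(Ut x y z t)*(pd VX (pd VT u) x y z t)*(pd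 VX (pd VY u) x y z t) + (-1)*(pd VX U x y z t)*a*(pd VT u x y z t)*(pd VX (pd VY u) x y z t) + (1)*(pd VX U x y z t)*a*(pd VZ u x y z t)*(pd VX (pd VY u) x y z t) + (-1)*(pd VX U x y z t)*(pd VT u x y z t)*(pd VX (pd VY u) x y z t) + (1)*(pd VX U x y z t)*(pd VZ u x y z t)*(pd VX (pd VY u) x y z t) + (-1)*(U x y z t)*a*(pd VX (pd VZ u) x y z t)*(pd VX (pd VY u) x y z t) + (1)*(U x y z t)*a*(pd VX (pd VT u) x y z t)*(pd VX (pd VY u) x y z t) + (1)*(U x y z t)*(pd VX (pd VT u) x y z t)*(pd VX (pd VY u) x y z t))/(pd VX u x y z t)^2)).
  { apply Rminus_diag_uniq. match type of HY2 with ?L = _ => transitivity (((pd VX u x y z t)^2/((1)*(pd VX u x y z t)^2)) * L) end;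
    [ field; nz Hux | rewrite HY2; ring ]. }
  assert (S5 : (pd VZ Ut x y z t) = (((1)*(pd VX Ut x y z t)*a*(pd VY u x y z t) + (-1)*(pd VX Ut x y z t)*a*(pd VZ u x y z t) + (-1)*(Ut x y z t)*a*(pd VX (pd VY u) x y z t) + (1)*(Ut x y z t)*a*(pd VX (pd VZ u) x y z t) + (1)*(Ut x y z t)*(pd VX (pd VZ u) x y z t) + (-1)*(pd VX U x y z t)*a*(pd VY u x y z t) + (1)*(pd VX U x y z t)*a*(pd VZ u x y z t) + (-1)*(pd VX U x y z t)*(pd VY u x y z t) + (1)*(pd VX U x y z t)*(pd VZ u x y z t) + (1)*(pd VY U x y z t)*(pd VX u x y z t) + (1)*(U x y z t)*a*(pd VX (pd VY u) x y z t) + (-1)*(U x y z t)*a*(pd VX (pd VZ u) x y z t) + (-1)*(U x y z t)*(pd VX (pd VZ u) x y z t))/(pd VX u x y z t)^1)).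
  { apply Rminus_diag_uniq. match type of H1 with ?L = _ => transitivity (((pd VX u x y z t)^1/((1)*(pd VX u x y z t)^1)) * L) end;
    [ field; nz Hux | rewrite H1; ring ]. }
  assert (S6 : (pd VT Ut x y z t) = (((-1)*(pd VX Ut x y z t)*a*(pd VT u x y z t) + (1)*(pd VX Ut x y z t)*a*(pd VZ u x y z t) + (-1)*(Ut x y z t)*a*(pd VX (pd VZ u) x y z t) + (1)*(Ut x y z t)*a*(pd VX (pd VT u) x y z t) + (1)*(Ut x y z t)*(pd VX (pd VT u) x y z t) + (1)*(pd VX U x y z t)*a*(pd VT u x y z t) + (-1)*(pd VX U x y z t)*a*(pd VZ u x y z t) + (1)*(pd VX U x y z t)*(pd VT u x y z t) + (-1)*(pd VX U x y z t)*(pd VZ u x y z t) + (1)*(pd VZ U x y z t)*(pd VX u x y z t) + (1)*(U x y z t)*a*(pd VX (pd VZ u) x y z t) + (-1)*(U x y z t)*a*(pd VX (pd VT u) x y z t) + (-1)*(U x y z t)*(pd VX (pd VT u) x y z t))/(pd VX u x y z t)^1)).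
  { apply Rminus_diag_uniq. match type of H2 with ?L = _ => transitivity (((pd VX u x y z t)^1/((1)*(pd VX u x y z t)^1)) * L) end;
    [ field; nz Hux | rewrite H2; ring ]. }
  assert (S7 : (pd VX (pd VY (pd VT u)) x y z t) = (((1)*(pd VX u x y z t)^2*(pd VX (pd VT u) x y z t)*(pd VX (pd VY u) x y z t) + (1)*(pd VY (pd VT u) x y z t)*(pd VX u x y z t)^2*(pd VX (pd VX u) x y z t) + (-2)*(pd VY u x y z t)*(pd VX u x y z t)*(pd VX (pd VT u) x y z t)*(pd VX (pd VX u) x y z t) + (2)*(pd VZ u x y z t)*(pd VX u x y z t)*(pd VX (pd VT u) x y z t)*(pd VX (pd VX u) x y z t) + (2)*a*(pd VY u x y z t)*(pd VX u x y z t)*(pd VX (pd VZ u) x y z t)*(pd VX (pd VX u) x y z t) + (-2)*a*(pd VY u x y z t)*(pd VX u x y z t)*(pd VX (pd VT u) x y z t)*(pd VX (pd VX u) x y z t) + (2)*a*(pd VZ u x y z t)*(pd VX u x y z t)*(pd VX (pd VT u) x y z t)*(pd VX (pd VX u) x y z t) + (-1)*(pd VZ (pd VZ u) x y z t)*(pd VX u x y z t)^2*(pd VX (pd VX u) x y z t) + (2)*(pd VZ u x y z t)*(pd VX u x y z t)*(pd VX (pd VZ u) x y z t)*(pd VX (pd VX u) x y z t) + (-2)*(pd VT u x y z t)*(pd VX u x y z t)*(pd VX (pd VZ u) x y z t)*(pd VX (pd VX u) x y z t) + (-2)*a*(pd VZ u x y z t)*(pd VX u x y z t)*(pd VX (pd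 VY u) x y z t)*(pd VX (pd VX u) x y z t) + (-2)*a*(pd VT u x y z t)*(pd VX u x y z t)*(pd VX (pd VZ u) x y z t)*(pd VX (pd VX u) x y z t) + (2)*a*(pd VT u x y z t)*(pd VX u x y z t)*(pd VX (pd VY u) x y z t)*(pd VX (pd VX u) x y z t) + (1)*a*(pd VZ u x y z t)*(pd VX u x y z t)^2*(pd VX (pd VX (pd VY u)) x y z t) + (-1)*a*(pd VT u x y z t)*(pd VX u x y z t)^2*(pd VX (pd VX (pd VY u)) x y z t) + (-1)*a*(pd VY u x y z t)*(pd VX u x y z t)^2*(pd VX (pd VX (pd VZ u)) x y z t) + (-1)*(pd VZ u x y z t)*(pd VX u x y z t)^2*(pd VX (pd VX (pd VZ u)) x y z t) + (1)*(pd VT u x y z t)*(pd VX u x y z t)^2*(pd VX (pd VX (pd VZ u)) x y z t) + (1)*a*(pd VT u x y z t)*(pd VX u x y z t)^2*(pd VX (pd VX (pd VZ u)) x y z t) + (-1)*(pd VX u x y z t)^2*(pd VX (pd VZ u) x y z t)^2 + (1)*(pd VX u x y z t)^3*(pd VX (pd VZ (pd VZ u)) x y z t) + (1)*(pd VY u x y z t)*(pd VX u x y z t)^2*(pd VX (pd VX (pd VT u)) x y z t) + (-1)*(pd VZ u x y z t)*(pd VX u x y z t)^2*(pd VX (pd VX (pd VT u)) x y z t) + (1)*a*(pd VY u x y z t)*(pd VX u x y z t)^2*(pd VX (pd VX (pd VT u)) x y z t) + (-1)*a*(pd VZ u x y z t)*(pd VX u x y z t)^2*(pd VX (pd VX (pd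 VT u)) x y z t))/(pd VX u x y z t)^3)).
  { apply Rminus_diag_uniq. match type of HDE with ?L = _ => transitivity (((pd VX u x y z t)^4/((1)*(pd VX u x y z t)^3)) * L) end;
    [ field; nz Hux | rewrite HDE; ring ]. }
  assert (S8 : (pd VY (pd VT u) x y z t) = (((1)*(pd VY u x y z t)*(pd VX u x y z t)*(pd VX (pd VT u) x y z t) + (-1)*(pd VZ u x y z t)*(pd VX u x y z t)*(pd VX (pd VT u) x y z t) + (-1)*a*(pd VY u x y z t)*(pd VX u x y z t)*(pd VX (pd VZ u) x y z t) + (1)*a*(pd VY u x y z t)*(pd VX u x y z t)*(pd VX (pd VT u) x y z t) + (-1)*a*(pd VZ u x y z t)*(pd VX u x y z t)*(pd VX (pd VT u) x y z t) + (1)*(pd VZ (pd VZ u) x y z t)*(pd VX u x y z t)^2 + (-1)*(pd VZ u x y z t)*(pd VX u x y z t)*(pd VX (pd VZ u) x y z t) + (1)*(pd VT u x y z t)*(pd VX u x y z t)*(pd VX (pd VZ u) x y z t) + (1)*a*(pd VZ u x y z t)*(pd VX u x y z t)*(pd VX (pd VY u) x y z t) + (1)*a*(pd VT u x y z t)*(pd VX u x y z t)*(pd VX (pd VZ u) x y z t) + (-1)*a*(pd VT u x y z t)*(pd VX u x y z t)*(pd VX (pd VY u) x y z t))/(pd VX u x y z t)^2)).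
  { apply Rminus_diag_uniq. match type of HE with ?L = _ => transitivity (((pd VX u x y z t)^3/((1)*(pd VX u x y z t)^2)) * L) end;
    [ field; nz Hux | rewrite HE; ring ]. }
  rewrite S1. rewrite S2. rewrite S3. rewrite S4. rewrite S5. rewrite S6. rewrite S7. rewrite S8. field; nz Hux.
Qed.

Theorem mainTheorem2 :
  forall (alpha : R) (O : R -> R -> R -> R -> Prop) (u U : fn),
    open4 O ->
    smooth_on O u ->
    (forall x y z t, O x y z t -> PDx u x y z t <> 0) ->
    (forall x y z t, O x y z t -> eq_star alpha u x y z t = 0) ->
    smooth_on O U ->
    (forall x y z t, O x y z t -> ell alpha u U x y z t = 0) ->
    (* (a) compatibility of ( ** ) *)
    (forall W : fn, smooth_on O W ->
       forall x y z t, O x y z t -> compat_expr alpha u U W x y z t = 0)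
    /\
    (* (b) every solution of ( ** ) is again a symmetry *)
    (forall Ut : fn, smooth_on O Ut ->
       (forall x y z t, O x y z t ->
          lhs1 alpha u Ut x y z t = rhs1 alpha u U x y z t /\
          lhs2 alpha u Ut x y z t = rhs2 alpha u U x y z t) ->
       forall x y z t, O x y z t -> ell alpha u Ut x y z t = 0).
Proof.
  intros alpha O u U HO Hu Hux HEq HU HEll. split.
  - intros W HW x y z t Hp. exact (partA alpha O u U W x y z t HO Hu Hux HEq HU HEll HW Hp).
  - intros Ut HUt HS x y z t Hp. exact (partB alpha O u U Ut x y z t HO Hu Hux HEq HU HUt HS Hp).
Qed.
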